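(* Let $p$ be a non-constant polynomial with integer coefficients such that there is no integer $a$ with $|a|\ge2$ and $p(\mathbb Z)\subseteq a\mathbb Z$. Then $Q=\{p(k);\,k\ge0\}$ is a Kazhdan set in $\mathbb Z$.
   Context: A subset $Q$ is a Kazhdan set in $\mathbb Z$ if there exists $\varepsilon>0$ such that every unitary representation $\pi$ of $\mathbb Z$ having a vector $x$ with $\sup_{n\in Q}\|\pi(n)x-x\|<\varepsilon\|x\|$ has a non-zero $\mathbb Z$-invariant vector. *)

(* Defs.v *)
From Stdlib Require Import Reals ZArith List.
Open Scope R_scope.

(* A complex Hilbert space, presented as a real Hilbert space (real inner
   product = real part of the complex inner product) together with a complex
   structure J (multiplication by i): J is real-linear, J (J x) = - x, and J
   preserves the real inner product. *)
Record CHilbert := {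
  hcar :> Type;
  hzero : hcar;
  hadd : hcar -> hcar -> hcar;
  hopp : hcar -> hcar;
  hscal : R -> hcar -> hcar;
  hinner : hcar -> hcar -> R;
  hJ : hcar -> hcar;
  hadd_assoc : forall x y z, hadd x (hadd y z) = hadd (hadd x y) z;
  hadd_comm : forall x y, hadd x y = hadd y x;
  hadd_0l : forall x, hadd hzero x = x;
  hadd_oppl : forall x, hadd (hopp x) x = hzero;
  hscal_assoc : forall a b x, hscal a (hscal b x) = hscal (a * b) x;
  hscal_1 : forall x, hscal 1 x = x;
  hscal_addr : forall a x y, hscal a (hadd x y) = hadd (hscal a x) (hscal a y);
  hscal_addl : forall a b x, hscal (a + b) x = hadd (hscal a x) (hscal b x);
  hinner_sym : forall x y, hinner x y = hinner y x;
  hinner_addl : forall x y z, hinner (hadd x y) z = hinner x z + hinner y z;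
  hinner_scall : forall a x y, hinner (hscal a x) y = a * hinner x y;
  hinner_pos : forall x, 0 <= hinner x x;
  hinner_def : forall x, hinner x x = 0 -> x = hzero;
  hJ_add : forall x y, hJ (hadd x y) = hadd (hJ x) (hJ y);
  hJ_scal : forall a x, hJ (hscal a x) = hscal a (hJ x);
  hJJ : forall x, hJ (hJ x) = hopp x;
  hJ_inner : forall x y, hinner (hJ x) (hJ y) = hinner x y;
  hcomplete : forall u : nat -> hcar,
    (forall eps, 0 < eps -> exists N : nat, forall m n, (N <= m)%nat -> (N <= n)%nat ->
        sqrt (hinner (hadd (u m) (hopp (u n))) (hadd (u m) (hopp (u n)))) < eps) ->
    exists l, forall eps, 0 < eps -> exists N : nat, forall n, (N <= n)%nat ->
        sqrt (hinner (hadd (u n) (hopp l)) (hadd (u n) (hopp l))) < eps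
}.

Definition hnorm {H : CHilbert} (x : H) : R := sqrt (hinner H x x).
Definition hsub {H : CHilbert} (x y : H) : H := hadd H x (hopp H y).

(* A unitary representation of the (discrete) group Z on H: a group
   homomorphism n |-> pi n into complex-linear isometric (hence unitary,
   since pi n has inverse pi (-n)) operators. *)
Definition unitary_rep (H : CHilbert) (pi : Z -> H -> H) : Prop :=
  (forall x, pi 0%Z x = x) /\
  (forall m n x, pi (m + n)%Z x = pi m (pi n x)) /\
  (forall n x y, pi n (hadd H x y) = hadd H (pi n x) (pi n y)) /\
  (forall n a x, pi n (hscal H a x) = hscal H a (pi n x)) /\
  (forall n x, pi n (hJ H x) = hJ H (pi n x)) /\
  (forall n x y, hinner H (pi n x) (pi n y) = hinner H x y).

(* Kazhdan set in Z. "sup_{n in Q} ||pi(n)x - x|| < eps ||x||" is rendered as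
   existence of a bound c < eps ||x|| for all ||pi(n)x - x||, n in Q. *)
Definition Kazhdan_set (Q : Z -> Prop) : Prop :=
  exists eps, 0 < eps /\
    forall (H : CHilbert) (pi : Z -> H -> H), unitary_rep H pi ->
      (exists x : H, exists c, c < eps * hnorm x /\
          forall n, Q n -> hnorm (hsub (pi n x) x) <= c) ->
      exists v : H, v <> hzero H /\ forall n, pi n v = v.

(* Integer polynomials as coefficient lists c = [c_0; c_1; ...]. *)
Definition zpoly_eval (c : list Z) (x : Z) : Z :=
  fold_right (fun a acc => (a + x * acc)%Z) 0%Z c.

Definition zpoly_nonconstant (c : list Z) : Prop :=
  exists i, (1 <= i)%nat /\ nth i c 0%Z <> 0%Z.

(* Main.v *)
Require Import Defs.
From Stdlib Require Import Reals ZArith List Lra Lia Psatz Classical ClassicalEpsilon FunctionalExtensionality.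
Open Scope R_scope.


Lemma hscal_0l {H : CHilbert} (x : H) : hscal H 0 x = hzero H.
Proof.
  assert (E : hscal H 0 x = hadd H (hscal H 0 x) (hscal H 0 x)).
  { rewrite <- hscal_addl. f_equal. ring. }
  assert (E2 : hadd H (hopp H (hscal H 0 x)) (hscal H 0 x) =
     hadd H (hopp H (hscal H 0 x)) (hadd H (hscal H 0 x) (hscal H 0 x))) by (rewrite <- E; reflexivity).
  rewrite hadd_assoc, hadd_oppl, hadd_0l in E2. congruence.
Qed.

Lemma hopp_scal {H : CHilbert} (x : H) : hopp H x = hscal H (-1) x.
Proof.
  assert (E : hadd H (hscal H (-1) x) x = hzero H).
  { rewrite <- (hscal_1 H x) at 2. rewrite <- hscal_addl.
    replace (-1+1) with 0 by ring. apply hscal_0l. }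
  assert (E2 : hadd H (hadd H (hscal H (-1) x) x) (hopp H x) = hadd H (hzero H) (hopp H x)) by (rewrite E; reflexivity).
  rewrite <- hadd_assoc, (hadd_comm H x), hadd_oppl, hadd_0l in E2.
  rewrite (hadd_comm H (hscal H (-1) x)), hadd_0l in E2. congruence.
Qed.

Lemma hin_0l {H : CHilbert} (w : H) : hinner H (hzero H) w = 0.
Proof. rewrite <- (hscal_0l w), hinner_scall. ring. Qed.

Lemma hin_0r {H : CHilbert} (w : H) : hinner H w (hzero H) = 0.
Proof. rewrite hinner_sym. apply hin_0l. Qed.

Lemma hin_addr {H : CHilbert} (x y z : H) : hinner H x (hadd H y z) = hinner H x y + hinner H x z.
Proof. rewrite !(hinner_sym H x). apply hinner_addl. Qed.

Lemma hin_scalr {H : CHilbert} a (x y : H) : hinner H x (hscal H a y) = a * hinner H x y.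
Proof. rewrite !(hinner_sym H x). apply hinner_scall. Qed.

Ltac hexp := unfold hsub, hnorm in *; repeat rewrite hopp_scal in *;
  repeat (rewrite ?hinner_addl, ?hin_addr, ?hinner_scall, ?hin_scalr, ?hin_0l, ?hin_0r in * ).

Lemma hext {H : CHilbert} (u v : H) : (forall w, hinner H u w = hinner H v w) -> u = v.
Proof.
  intros E. assert (Z : hinner H (hsub u v) (hsub u v) = 0).
  { unfold hsub. rewrite hinner_addl, E, hopp_scal, hinner_scall. ring. }
  apply hinner_def in Z. unfold hsub in Z.
  transitivity (hadd H u (hadd H (hopp H v) v)).
  - rewrite hadd_oppl, hadd_comm, hadd_0l. reflexivity.
  - rewrite hadd_assoc, Z, hadd_0l. reflexivity.
Qed.

Ltac veq := apply hext; intro; hexp; field.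

Lemma hnrm_pos {H : CHilbert} (x : H) : 0 <= hnorm x.
Proof. apply sqrt_pos. Qed.

Lemma CS {H : CHilbert} (x y : H) : hinner H x y * hinner H x y <= hinner H x x * hinner H y y.
Proof.
  assert (P : forall t, 0 <= hinner H x x + 2 * t * hinner H x y + t * t * hinner H y y).
  { intro t. pose proof (hinner_pos H (hadd H x (hscal H t y))) as P. hexp.
    rewrite (hinner_sym H y x) in P. lra. }
  pose proof (hinner_pos H x). pose proof (hinner_pos H y).
  set (a := hinner H x x) in *. set (b := hinner H x y) in *. set (c := hinner H y y) in *.
  destruct (Req_dec c 0) as [C0|C0].
  - destruct (Req_dec b 0) as [B0|B0].
    + rewrite B0, C0. lra.
    + exfalso. specialize (P (-(a+1)/(2*b))). rewrite C0 in P.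
      replace (a + 2 * (- (a + 1) / (2 * b)) * b + - (a + 1) / (2 * b) * (- (a + 1) / (2 * b)) * 0) with (-1) in P by (field; auto). lra.
  - assert (Cp : 0 < c) by lra. specialize (P (-b/c)).
    assert (E : c * (a + 2 * (-b/c) * b + (-b/c) * (-b/c) * c) = a*c - b*b) by (field; lra).
    assert (0 <= c * (a + 2 * (-b/c) * b + (-b/c) * (-b/c) * c)) by (apply Rmult_le_pos; lra).
    lra.
Qed.

Lemma htri {H : CHilbert} (x y : H) : hnorm (hadd H x y) <= hnorm x + hnorm y.
Proof.
  pose proof (CS x y). pose proof (hinner_pos H x). pose proof (hinner_pos H y).
  pose proof (hinner_pos H (hadd H x y)).
  unfold hnorm. rewrite <- (sqrt_square (sqrt (hinner H x x) + sqrt (hinner H y y)))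
    by (pose proof (sqrt_pos (hinner H x x)); pose proof (sqrt_pos (hinner H y y)); lra).
  apply sqrt_le_1_alt.
  assert (E : hinner H (hadd H x y) (hadd H x y) = hinner H x x + 2 * hinner H x y + hinner H y y).
  { rewrite hinner_addl, !hin_addr, (hinner_sym H y x). ring. }
  rewrite E.
  assert (hinner H x y <= sqrt (hinner H x x) * sqrt (hinner H y y)).
  { rewrite <- sqrt_mult by auto.
    destruct (Rle_dec (hinner H x y) 0). { pose proof (sqrt_pos (hinner H x x * hinner H y y)). lra. }
    rewrite <- (sqrt_square (hinner H x y)) by lra. apply sqrt_le_1_alt. auto. }
  pose proof (sqrt_sqrt (hinner H x x)). pose proof (sqrt_sqrt (hinner H y y)). nra.
Qed.

Lemma hnorm_scal {H : CHilbert} a (x : H) : hnorm (hscal H a x) = Rabs a * hnorm x.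
Proof.
  unfold hnorm. rewrite hinner_scall, hin_scalr, <- Rmult_assoc.
  rewrite sqrt_mult by (try apply hinner_pos; nra).
  f_equal. rewrite <- sqrt_Rsqr_abs. reflexivity.
Qed.

Lemma hnorm_opp {H : CHilbert} (x : H) : hnorm (hopp H x) = hnorm x.
Proof. rewrite hopp_scal, hnorm_scal. replace (Rabs (-1)) with 1 by (rewrite Rabs_left; lra). ring. Qed.

Lemma hnorm_eq0 {H : CHilbert} (x : H) : hnorm x = 0 -> x = hzero H.
Proof.
  unfold hnorm. intro E. apply hinner_def. pose proof (hinner_pos H x).
  apply sqrt_eq_0; auto.
Qed.

Lemma hsub_tri {H : CHilbert} (x y z : H) : hnorm (hsub x z) <= hnorm (hsub x y) + hnorm (hsub y z).
Proof.
  replace (hsub x z) with (hadd H (hsub x y) (hsub y z)) by veq. apply htri.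
Qed.

Lemma hsub_sym {H : CHilbert} (x y : H) : hnorm (hsub x y) = hnorm (hsub y x).
Proof.
  replace (hsub x y) with (hopp H (hsub y x)) by veq. apply hnorm_opp.
Qed.

Lemma hsub_small {H : CHilbert} (x y : H) : (forall d, 0 < d -> hnorm (hsub x y) < d) -> x = y.
Proof.
  intro A. assert (hnorm (hsub x y) = 0).
  { pose proof (hnrm_pos (hsub x y)). destruct (Req_dec (hnorm (hsub x y)) 0); auto.
    specialize (A (hnorm (hsub x y))). lra. }
  apply hnorm_eq0 in H0. apply hext. intro w.
  assert (E : hinner H (hsub x y) w = 0) by (rewrite H0; apply hin_0l).
  hexp. lra.
Qed.

Lemma hsub_0 {H : CHilbert} (x : H) : hnorm (hsub (hzero H) x) = hnorm x.
Proof. replace (hsub (hzero H) x) with (hopp H x) by veq. apply hnorm_opp. Qed.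


Lemma pi_zero {H : CHilbert} pi (U : unitary_rep H pi) n : pi n (hzero H) = hzero H.
Proof.
  destruct U as (_&_&_&Us&_).
  transitivity (pi n (hscal H 0 (hzero H))). { rewrite hscal_0l. reflexivity. }
  rewrite Us, hscal_0l. reflexivity.
Qed.

Lemma pi_opp {H : CHilbert} pi (U : unitary_rep H pi) n x : pi n (hopp H x) = hopp H (pi n x).
Proof. destruct U as (_&_&_&Us&_). rewrite !hopp_scal, Us. reflexivity. Qed.

Lemma pi_sub {H : CHilbert} pi (U : unitary_rep H pi) n x y : pi n (hsub x y) = hsub (pi n x) (pi n y).
Proof. unfold hsub. destruct U as (A&B&C&D). rewrite C, pi_opp; auto. split; auto. Qed.

Lemma pi_norm {H : CHilbert} pi (U : unitary_rep H pi) n x : hnorm (pi n x) = hnorm x.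
Proof. destruct U as (_&_&_&_&_&I). unfold hnorm. rewrite I. reflexivity. Qed.

Fixpoint cc {H : CHilbert} (pi : Z -> H -> H) (x : H) (l : list (R * Z)) : H :=
  match l with nil => hzero H | (w, n) :: l' => hadd H (hscal H w (pi n x)) (cc pi x l') end.
Fixpoint sumw (l : list (R * Z)) : R := match l with nil => 0 | (w, _) :: l' => w + sumw l' end.
Definition nonneg (l : list (R * Z)) := Forall (fun p => 0 <= fst p) l.
Definition valid l := nonneg l /\ sumw l = 1.

Lemma sumw_nonneg l : nonneg l -> 0 <= sumw l.
Proof. induction 1 as [|[w n] l' A B C]; simpl in *; lra. Qed.

Lemma cc_dev {H : CHilbert} pi (x : H) R0 :
  (forall n, hnorm (hsub (pi n x) x) <= R0) ->
  forall l, nonneg l -> hnorm (hsub (cc pi x l) (hscal H (sumw l) x)) <= sumw l * R0.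
Proof.
  intros B l N. induction N as [|[w n] l' A N' IH]; simpl in *.
  - replace (hsub (hzero H) (hscal H 0 x)) with (hzero H) by veq.
    replace (hzero H) with (hscal H 0 (hzero H)) by veq. rewrite hnorm_scal, Rabs_R0. lra.
  - replace (hsub (hadd H (hscal H w (pi n x)) (cc pi x l')) (hscal H (w + sumw l') x))
      with (hadd H (hscal H w (hsub (pi n x) x)) (hsub (cc pi x l') (hscal H (sumw l') x))) by veq.
    eapply Rle_trans. apply htri. rewrite hnorm_scal, Rabs_pos_eq by auto.
    specialize (B n). nra.
Qed.

Definition shiftl (m : Z) (l : list (R * Z)) := map (fun p => (fst p, (m + snd p)%Z)) l.
Definition halfl (l : list (R * Z)) := map (fun p => (fst p / 2, snd p)) l.

Lemma cc_pi {H : CHilbert} pi (U : unitary_rep H pi) x m l : pi m (cc pi x l) = cc pi x (shiftl m l).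
Proof.
  induction l as [|[w n] l IH]; simpl. { apply pi_zero; auto. }
  destruct U as (A&B&C&D&E). rewrite C, D, IH, B. reflexivity.
Qed.

Lemma valid_shift m l : valid l -> valid (shiftl m l).
Proof.
  intros [N S]. split.
  - unfold nonneg, shiftl. apply Forall_map. eapply Forall_impl; [|exact N]. simpl. auto.
  - rewrite <- S. clear. induction l as [|[w n] l IH]; simpl; auto. rewrite IH. auto.
Qed.

Lemma cc_app {H : CHilbert} pi (x : H) l1 l2 : cc pi x (l1 ++ l2) = hadd H (cc pi x l1) (cc pi x l2).
Proof. induction l1 as [|[w n] l IH]; simpl. { rewrite hadd_0l. auto. } rewrite IH. veq. Qed.

Lemma cc_half {H : CHilbert} pi (x : H) l : cc pi x (halfl l) = hscal H (1/2) (cc pi x l).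
Proof.
  induction l as [|[w n] l IH]. { simpl. veq. }
  change (halfl ((w,n)::l)) with ((w/2,n) :: halfl l). simpl. rewrite IH. veq.
Qed.

Lemma sumw_app l1 l2 : sumw (l1 ++ l2) = sumw l1 + sumw l2.
Proof. induction l1 as [|[w n] l IH]; simpl; [ring|]. rewrite IH; ring. Qed.

Lemma sumw_half l : sumw (halfl l) = sumw l / 2.
Proof. induction l as [|[w n] l IH]; [simpl; field|].
  change (halfl ((w,n)::l)) with ((w/2,n) :: halfl l). simpl. rewrite IH; field. Qed.

Lemma valid_mid l1 l2 : valid l1 -> valid l2 -> valid (halfl (l1 ++ l2)).
Proof.
  intros [N1 S1] [N2 S2]. split.
  - unfold nonneg, halfl. apply Forall_map. apply Forall_app. split;
    (eapply Forall_impl; [|eassumption]); simpl; intros; lra.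
  - rewrite sumw_half, sumw_app. lra.
Qed.

Lemma parallelogram {H : CHilbert} (a b : H) :
  hinner H (hsub a b) (hsub a b) = 2 * hinner H a a + 2 * hinner H b b
     - 4 * hinner H (hscal H (1/2) (hadd H a b)) (hscal H (1/2) (hadd H a b)).
Proof. hexp. rewrite (hinner_sym H b a). field. Qed.

Lemma archi (e : R) : 0 < e -> exists N : nat, forall k, (N <= k)%nat -> sqrt (4 / (INR k + 1)) < e.
Proof.
  intro He. destruct (INR_archimed 1 (4 / (e*e))) as [N HN]; [lra|].
  exists N. intros k Hk. apply le_INR in Hk.
  assert (P : 0 < e * e) by nra.
  assert (4 / (e*e) * (e*e) = 4) by (field; lra).
  assert (Q : 4 < e * e * (INR k + 1)) by nra.
  rewrite <- (sqrt_square e) by lra. apply sqrt_lt_1_alt. split.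
  - pose proof (pos_INR k). apply Rlt_le, Rdiv_lt_0_compat; lra.
  - apply (Rmult_lt_reg_r (INR k + 1)). pose proof (pos_INR k); lra.
    unfold Rdiv. rewrite Rmult_assoc, Rinv_l by (pose proof (pos_INR k); lra). lra.
Qed.

Lemma inv_vector {H : CHilbert} pi (U : unitary_rep H pi) (x : H) R0 :
  (forall n, hnorm (hsub (pi n x) x) <= R0) -> R0 < hnorm x ->
  exists v, v <> hzero H /\ forall n, pi n v = v.
Proof.
  intros B Rlt.
  set (nr := fun l => hinner H (cc pi x l) (cc pi x l)).
  set (E := fun r => exists l, valid l /\ r = - nr l).
  assert (Eb : bound E).
  { exists 0. intros r [l [_ ->]]. unfold nr. pose proof (hinner_pos H (cc pi x l)). lra. }
  assert (l0v : valid ((1, 0%Z) :: nil)) by (split; [repeat constructor; simpl; lra | simpl; lra]).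
  assert (Ene : exists r, E r) by (eexists; exists ((1,0%Z)::nil); split; eauto).
  destruct (completeness E Eb Ene) as [m [Mub Mlub]].
  set (d2 := - m).
  assert (low : forall l, valid l -> d2 <= nr l).
  { intros l vl. assert (E (- nr l)) by (exists l; auto). apply Mub in H0. unfold d2; lra. }
  assert (approx : forall e, 0 < e -> exists l, valid l /\ nr l < d2 + e).
  { intros e He. apply NNPP. intro N.
    assert (m <= m - e); [|lra]. apply Mlub. intros r [l [vl ->]].
    destruct (Rlt_dec (nr l) (d2 + e)). { exfalso; apply N; eauto. } unfold d2 in *; lra. }
  assert (close : forall l1 l2 e1 e2, valid l1 -> valid l2 -> nr l1 < d2 + e1 -> nr l2 < d2 + e2 ->
     hnorm (hsub (cc pi x l1) (cc pi x l2)) <= sqrt (2 * e1 + 2 * e2)).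
  { intros l1 l2 e1 e2 v1 v2 n1 n2. unfold hnorm. apply sqrt_le_1_alt.
    rewrite parallelogram. pose proof (low _ (valid_mid _ _ v1 v2)) as L.
    unfold nr in L. rewrite cc_half, cc_app in L. unfold nr in n1, n2. lra. }
  assert (F : forall k : nat, {l | valid l /\ nr l < d2 + 1 / (INR k + 1)}).
  { intro k. apply constructive_indefinite_description. apply approx.
    pose proof (pos_INR k). apply Rdiv_lt_0_compat; lra. }
  set (lk := fun k => proj1_sig (F k)).
  assert (lkv : forall k, valid (lk k)) by (intro k; unfold lk; destruct (F k) as [l [? ?]]; auto).
  assert (lkn : forall k, nr (lk k) < d2 + 1 / (INR k + 1)) by (intro k; unfold lk; destruct (F k) as [l [? ?]]; auto).
  set (u := fun k => cc pi x (lk k)).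
  assert (cl : forall k j, (k <= j)%nat -> hnorm (hsub (u k) (u j)) <= sqrt (4 / (INR k + 1))).
  { intros k j Hkj. eapply Rle_trans. apply (close _ _ _ _ (lkv k) (lkv j) (lkn k) (lkn j)).
    apply sqrt_le_1_alt. apply le_INR in Hkj. pose proof (pos_INR k).
    assert (1 / (INR j + 1) <= 1 / (INR k + 1)).
    { apply Rmult_le_compat_l; [lra|]. apply Rinv_le_contravar; lra. }
    lra. }
  destruct (hcomplete H u) as [z Hz].
  { intros eps He. destruct (archi eps He) as [N HN]. exists N. intros a b Ha Hb.
    change (hnorm (hsub (u a) (u b)) < eps).
    destruct (Nat.le_ge_cases a b).
    - eapply Rle_lt_trans. apply cl; auto. apply HN; auto.
    - rewrite hsub_sym. eapply Rle_lt_trans. apply cl; auto. apply HN; auto. }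
  change (forall eps, 0 < eps -> exists N, forall n, (N <= n)%nat -> hnorm (hsub (u n) z) < eps) in Hz.
  assert (inv1 : pi 1%Z z = z).
  { symmetry. apply hsub_small. intros d Hd.
    destruct (Hz (d/3)) as [N0 HN0]; [lra|]. destruct (archi (d/3)) as [N1 HN1]; [lra|].
    set (k := Nat.max N0 N1).
    assert (A1 : hnorm (hsub (u k) z) < d/3) by (apply HN0; lia).
    assert (A2 : sqrt (4 / (INR k + 1)) < d / 3) by (apply HN1; lia).
    assert (A3 : hnorm (hsub (u k) (pi 1%Z (u k))) <= sqrt (4 / (INR k + 1))).
    { unfold u. rewrite cc_pi by auto. eapply Rle_trans.
      apply (close _ _ (1 / (INR k + 1)) (1 / (INR k + 1)) (lkv k) (valid_shift 1 _ (lkv k)) (lkn k)).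
      - unfold nr. rewrite <- cc_pi by auto. destruct U as (_&_&_&_&_&I). rewrite I. apply lkn.
      - apply Req_le. f_equal. field. pose proof (pos_INR k); lra. }
    assert (A4 : hnorm (hsub (pi 1%Z (u k)) (pi 1%Z z)) = hnorm (hsub (u k) z)).
    { rewrite <- pi_sub by auto. apply pi_norm; auto. }
    pose proof (hsub_tri z (u k) (pi 1%Z z)). pose proof (hsub_tri (u k) (pi 1%Z (u k)) (pi 1%Z z)).
    assert (A1b : hnorm (hsub z (u k)) < d/3) by (rewrite hsub_sym; auto). lra. }
  exists z. split.
  - intro Z0. subst z.
    destruct (Hz (hnorm x - R0)) as [N0 HN0]; [lra|].
    specialize (HN0 N0 (le_n _)).
    assert (D : hnorm (hsub (u N0) x) <= R0).
    { pose proof (cc_dev pi x R0 B (lk N0) (proj1 (lkv N0))) as C.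
      rewrite (proj2 (lkv N0)), hscal_1 in C. unfold u. lra. }
    pose proof (hsub_tri (hzero H) (u N0) x) as T. rewrite hsub_0 in T. rewrite (hsub_sym (hzero H)) in T. lra.
  - destruct U as (P0&Padd&_).
    assert (pos : forall k : nat, pi (Z.of_nat k) z = z).
    { induction k. { apply P0. } rewrite Nat2Z.inj_succ, <- Z.add_1_r, Padd, inv1. auto. }
    intro n. destruct (Z_le_gt_dec 0 n).
    + rewrite <- (Z2Nat.id n) by lia. apply pos.
    + rewrite <- (pos (Z.to_nat (- n))) at 1. rewrite <- Padd.
      replace (n + Z.of_nat (Z.to_nat (- n)))%Z with 0%Z by lia. apply P0.
Qed.

Open Scope Z_scope.

Inductive Reach (Q : Z -> Prop) : nat -> Z -> Prop :=
| Rz : Reach Q 0 0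
| Rw : forall j n, Reach Q j n -> Reach Q (S j) n
| Rp : forall j n q, Reach Q j n -> Q q -> Reach Q (S j) (n + q)
| Rm : forall j n q, Reach Q j n -> Q q -> Reach Q (S j) (n - q).

Lemma Reach_mono Q j k n : Reach Q j n -> (j <= k)%nat -> Reach Q k n.
Proof. intros R Hk. induction Hk; auto. apply Rw; auto. Qed.

Lemma Reach_opp Q j n : Reach Q j n -> Reach Q j (- n).
Proof.
  induction 1. - apply Rz. - apply Rw; auto.
  - replace (- (n + q)) with (- n - q) by ring. apply Rm; auto.
  - replace (- (n - q)) with (- n + q) by ring. apply Rp; auto.
Qed.

Lemma Reach_add Q j k a b : Reach Q j a -> Reach Q k b -> Reach Q (j + k) (a + b).
Proof.
  intros Ra Rb. induction Rb.
  - rewrite Nat.add_0_r, Z.add_0_r. auto.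
  - rewrite Nat.add_succ_r. apply Rw; auto.
  - rewrite Nat.add_succ_r, Z.add_assoc. apply Rp; auto.
  - rewrite Nat.add_succ_r. replace (a + (n - q)) with (a + n - q) by ring. apply Rm; auto.
Qed.

Lemma Reach_sub Q j k a b : Reach Q j a -> Reach Q k b -> Reach Q (j + k) (a - b).
Proof. intros. apply Reach_add; auto. apply Reach_opp; auto. Qed.

Lemma Reach_mul Q j a m : Reach Q j a -> Reach Q (j * m) (a * Z.of_nat m).
Proof.
  intro R. induction m.
  - rewrite Nat.mul_0_r. simpl. rewrite Z.mul_0_r. apply Rz.
  - rewrite Nat.mul_succ_r, Nat.add_comm, Nat2Z.inj_succ, Z.mul_succ_r, Z.add_comm.
    apply Reach_add; auto.
Qed.

Lemma Reach_Q (Q : Z -> Prop) q : Q q -> Reach Q 1 q.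
Proof. intro. replace q with (0 + q) by ring. apply Rp; auto. apply Rz. Qed.

Definition D (f : nat -> Z) : nat -> Z := fun k => f (S k) - f k.
Fixpoint iterD (n : nat) (f : nat -> Z) : nat -> Z :=
  match n with O => f | S n => iterD n (D f) end.

Lemma iterD_reach Q j n : forall f, (forall k, Reach Q j (f k)) -> forall k, Reach Q (2 ^ n * j) (iterD n f k).
Proof.
  revert j. induction n; intros j f R k; simpl.
  - rewrite Nat.add_0_r. auto.
  - replace ((2 ^ n + (2 ^ n + 0)) * j)%nat with (2 ^ n * (j + j))%nat by lia.
    apply IHn. intro. apply Reach_sub; auto.
Qed.

Lemma iterD_add n : forall f g, iterD n (fun k => f k + g k) = fun k => iterD n f k + iterD n g k.
Proof.
  induction n; intros; simpl; auto.
  rewrite <- IHn. f_equal. unfold D. apply functional_extensionality. intro; ring.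
Qed.

Lemma iterD_shift n : forall f, iterD n (fun k => f (S k)) = fun k => iterD n f (S k).
Proof. induction n; intros; simpl; auto. rewrite <- IHn. reflexivity. Qed.

Lemma iterD_zero n : iterD n (fun _ => 0) = fun _ => 0.
Proof.
  induction n; simpl; auto.
Qed.

Lemma mulk N : forall h, iterD N h = (fun _ => 0) ->
  iterD N (D (fun k => Z.of_nat k * h k)) = fun _ => 0.
Proof.
  assert (E : forall h, D (fun k => Z.of_nat k * h k) = fun k => h (S k) + Z.of_nat k * D h k).
  { intro h. unfold D. apply functional_extensionality. intro k. rewrite Nat2Z.inj_succ. ring. }
  induction N; intros h Hh.
  - simpl in *. subst h. rewrite E. unfold D. apply functional_extensionality. intro. ring.
  - rewrite E, iterD_add, iterD_shift. simpl iterD at 2. rewrite IHN by auto.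
    change (iterD (S N) h = fun _ => 0) in Hh. rewrite Hh. apply functional_extensionality. intro; ring.
Qed.

Definition ev (c : list Z) : nat -> Z := fun k => zpoly_eval c (Z.of_nat k).

Lemma poly_fin c : iterD (length c) (ev c) = fun _ => 0.
Proof.
  induction c as [|a c IH]. { reflexivity. }
  simpl length. simpl iterD.
  replace (D (ev (a :: c))) with (D (fun k => Z.of_nat k * ev c k)).
  { apply mulk. auto. }
  unfold D, ev. apply functional_extensionality. intro k. simpl. ring.
Qed.

Lemma dichot N : forall f, iterD N f = (fun _ => 0) ->
  (forall k, f k = f 0%nat) \/ exists s A, A <> 0 /\ forall k, D (iterD s f) k = A.
Proof.
  induction N; intros f Hf.
  - left. simpl in Hf. subst. auto.
  - destruct (IHN (D f) Hf) as [C | [s [A [HA HD]]]].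
    + destruct (Z.eq_dec (D f 0%nat) 0) as [Z0|Z0].
      * left. induction k; auto. specialize (C k). rewrite Z0 in C. unfold D in C. lia.
      * right. exists 0%nat, (D f 0%nat). split; auto.
    + right. exists (S s), A. auto.
Qed.

Lemma lin_g (g : nat -> Z) A : (forall k, D g k = A) -> forall k, g k = g 0%nat + A * Z.of_nat k.
Proof. intro HD. induction k. { simpl. ring. } specialize (HD k). unfold D in HD. rewrite Nat2Z.inj_succ. lia. Qed.

Lemma zero_poly c : (forall k : nat, (1 <= k)%nat -> ev c k = 0) -> forall i, nth i c 0 = 0.
Proof.
  induction c as [|b c IH]; intros Hz i. { destruct i; reflexivity. }
  assert (Hb : b = 0).
  { apply NNPP. intro Hb.
    set (k := Z.to_nat (Z.abs b + 1)).
    specialize (Hz k ltac:(unfold k; lia)). unfold ev in Hz. simpl in Hz.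
    assert (Dk : (Z.of_nat k | b)). { exists (- zpoly_eval c (Z.of_nat k)). lia. }
    apply Z.divide_abs_r in Dk. apply Z.divide_pos_le in Dk; [|lia]. unfold k in Dk. lia. }
  subst b. destruct i. { reflexivity. } simpl. apply IH. intros k Hk.
  specialize (Hz k Hk). unfold ev in *. simpl in Hz. nia.
Qed.

Lemma nonconst_fun c : zpoly_nonconstant c -> exists k, ev c k <> ev c 0%nat.
Proof.
  intros [i [Hi Hn]]. apply NNPP. intro N.
  assert (C : forall k, ev c k = ev c 0%nat) by (intro k; apply NNPP; intro; apply N; eauto).
  destruct c as [|a c]. { destruct i; simpl in Hn; congruence. }
  destruct i as [|i]. { lia. } simpl in Hn. apply Hn. apply zero_poly. intros k Hk.
  specialize (C k). unfold ev in *. simpl in C. nia.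
Qed.

Lemma periodic c g : forall k t, (g | zpoly_eval c (k + g * t) - zpoly_eval c k).
Proof.
  induction c as [|a c IH]; intros k t; simpl.
  - exists 0. ring.
  - replace (a + (k + g * t) * zpoly_eval c (k + g * t) - (a + k * zpoly_eval c k))
      with (k * (zpoly_eval c (k + g * t) - zpoly_eval c k) + g * (t * zpoly_eval c (k + g * t))) by ring.
    apply Z.divide_add_r. apply Z.divide_mul_r. apply IH. apply Z.divide_mul_l. apply Z.divide_refl.
Qed.


Definition Gs (Q : Z -> Prop) n := exists j, Reach Q j n.

Lemma Gs_sub Q a b : Gs Q a -> Gs Q b -> Gs Q (a - b).
Proof. intros [j A] [k B]. exists (j + k)%nat. apply Reach_sub; auto. Qed.

Lemma Gs_mul Q a t : Gs Q a -> Gs Q (a * t).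
Proof.
  intros [j A]. destruct (Z_le_gt_dec 0 t).
  - exists (j * Z.to_nat t)%nat. replace (a * t) with (a * Z.of_nat (Z.to_nat t)) by (rewrite Z2Nat.id by lia; ring). apply Reach_mul; auto.
  - exists (j * Z.to_nat (- t))%nat. replace (a * t) with (- (a * Z.of_nat (Z.to_nat (- t)))) by (rewrite Z2Nat.id by lia; ring).
    apply Reach_opp. apply Reach_mul; auto.
Qed.

Lemma minpos Q : forall n : nat, forall g, g = Z.of_nat n -> 0 < g -> Gs Q g ->
  exists g', 0 < g' /\ Gs Q g' /\ forall m, Gs Q m -> (g' | m).
Proof.
  intro n. induction n as [n IH] using lt_wf_ind. intros g Hg Hp HG.
  destruct (classic (forall m, Gs Q m -> (g | m))) as [A|A]. { exists g; auto. }
  apply not_all_ex_not in A. destruct A as [m Am].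
  apply imply_to_and in Am. destruct Am as [Gm Nd].
  assert (Gr : Gs Q (m mod g)).
  { rewrite Z.mod_eq by lia. apply Gs_sub; auto. apply Gs_mul; auto. }
  assert (Rr : 0 <= m mod g < g) by (apply Z.mod_pos_bound; lia).
  assert (Rn : m mod g <> 0) by (intro E; apply Nd; apply Z.mod_divide; lia).
  apply (IH (Z.to_nat (m mod g))) with (g := m mod g); auto; lia.
Qed.

Lemma bounded_gen c : zpoly_nonconstant c ->
  ~ (exists a : Z, (2 <= Z.abs a)%Z /\ forall k : Z, (a | zpoly_eval c k)%Z) ->
  exists K, forall n, Reach (fun n : Z => exists k : nat, n = zpoly_eval c (Z.of_nat k)) K n.
Proof.
  intros Nc Ng. set (Q := fun n : Z => exists k : nat, n = zpoly_eval c (Z.of_nat k)).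
  assert (RQ : forall k, Reach Q 1 (ev c k)) by (intro k; apply Reach_Q; exists k; reflexivity).
  destruct (dichot _ _ (poly_fin c)) as [Cst | [s [A [HA HD]]]].
  { exfalso. destruct (nonconst_fun c Nc) as [k Hk]. apply Hk, Cst. }
  pose proof (lin_g _ _ HD) as Lg.
  pose proof (iterD_reach Q 1 s (ev c) RQ) as Rg.
  set (M := (2 ^ s * 1 + 2 ^ s * 1)%nat).
  assert (RA : forall m : Z, Reach Q M (A * m)).
  { assert (P : forall m : nat, Reach Q M (A * Z.of_nat m)).
    { intro m. replace (A * Z.of_nat m) with (iterD s (ev c) m - iterD s (ev c) 0%nat) by (rewrite (Lg m); ring).
      apply Reach_sub; auto. }
    intro m. destruct (Z_le_gt_dec 0 m).
    - rewrite <- (Z2Nat.id m) by lia. apply P.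
    - replace (A * m) with (- (A * Z.of_nat (Z.to_nat (- m)))) by lia. apply Reach_opp, P. }
  assert (GA : Gs Q (Z.abs A)).
  { exists M. destruct (Z.abs_eq_or_opp A) as [E|E]; rewrite E.
    - rewrite <- (Z.mul_1_r A) at 1. auto.
    - replace (- A) with (A * -1) by ring. auto. }
  destruct (minpos Q (Z.to_nat (Z.abs A)) (Z.abs A) ltac:(lia) ltac:(lia) GA) as [g [gp [Gg gd]]].
  assert (g1 : g = 1).
  { assert (Dv : forall k : nat, (g | ev c k)) by (intro k; apply gd; exists 1%nat; auto).
    assert (Dz : forall k : Z, (g | zpoly_eval c k)).
    { intro k. pose proof (periodic c g (k mod g) (k / g)) as P.
      replace (k mod g + g * (k / g)) with k in P by (rewrite (Z.div_mod k g) at 1 by lia; ring).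
      specialize (Dv (Z.to_nat (k mod g))). unfold ev in Dv.
      rewrite Z2Nat.id in Dv by (apply Z.mod_pos_bound; lia).
      replace (zpoly_eval c k) with ((zpoly_eval c k - zpoly_eval c (k mod g)) + zpoly_eval c (k mod g)) by ring.
      apply Z.divide_add_r; auto. }
    destruct (Z_le_gt_dec 2 g). { exfalso. apply Ng. exists g. split; auto. lia. } lia. }
  subst g. destruct Gg as [L RL].
  exists (M + L * Z.to_nat (Z.abs A))%nat. intro n.
  assert (AZ : A <> 0) by auto.
  rewrite (Z.div_mod n (Z.abs A)) by lia.
  apply Reach_add.
  - rewrite Z.mul_comm. 
    destruct (Z.abs_eq_or_opp A) as [E|E]; rewrite E.
    + rewrite Z.mul_comm. auto.
    + replace (n / - A * - A) with (A * (- (n / - A))) by ring. auto.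
  - apply Reach_mono with (L * Z.to_nat (n mod Z.abs A))%nat.
    + rewrite <- (Z2Nat.id (n mod Z.abs A)) at 2 by (apply Z.mod_pos_bound; lia).
      rewrite <- (Z.mul_1_l (Z.of_nat _)). apply Reach_mul; auto.
    + apply Nat.mul_le_mono_l. pose proof (Z.mod_pos_bound n (Z.abs A)). lia.
Qed.
Close Scope Z_scope.

Lemma pi_addb {H : CHilbert} pi (U : unitary_rep H pi) (x : H) a b :
  hnorm (hsub (pi (a + b)%Z x) x) <= hnorm (hsub (pi a x) x) + hnorm (hsub (pi b x) x).
Proof.
  pose proof U as (_&Pa&_). rewrite Pa.
  eapply Rle_trans. apply (hsub_tri _ (pi a x)).
  rewrite <- pi_sub, pi_norm by auto. lra.
Qed.

Lemma pi_negb {H : CHilbert} pi (U : unitary_rep H pi) (x : H) b :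
  hnorm (hsub (pi (- b)%Z x) x) = hnorm (hsub (pi b x) x).
Proof.
  pose proof U as (P0&Pa&_).
  transitivity (hnorm (hsub (pi (- b)%Z x) (pi (- b)%Z (pi b x)))).
  { rewrite <- Pa. replace (- b + b)%Z with 0%Z by lia. rewrite P0. auto. }
  rewrite <- pi_sub, pi_norm by auto. apply hsub_sym.
Qed.

Lemma reach_bound {H : CHilbert} pi (U : unitary_rep H pi) (x : H) (Q : Z -> Prop) c :
  0 <= c -> (forall q, Q q -> hnorm (hsub (pi q x) x) <= c) ->
  forall j n, Reach Q j n -> hnorm (hsub (pi n x) x) <= INR j * c.
Proof.
  intros Hc B j n R. induction R.
  - pose proof U as (P0&_). rewrite P0. simpl. replace (hsub x x) with (hscal H 0 x) by veq.
    rewrite hnorm_scal, Rabs_R0. lra.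
  - rewrite S_INR. lra.
  - rewrite S_INR. eapply Rle_trans. apply pi_addb; auto. specialize (B q H0). lra.
  - rewrite S_INR. unfold Z.sub. eapply Rle_trans. apply pi_addb; auto.
    rewrite pi_negb by auto. specialize (B q H0). lra.
Qed.

Theorem mainTheorem11 (c : list Z) :
  zpoly_nonconstant c ->
  ~ (exists a : Z, (2 <= Z.abs a)%Z /\ forall k : Z, (a | zpoly_eval c k)%Z) ->
  Kazhdan_set (fun n : Z => exists k : nat, n = zpoly_eval c (Z.of_nat k)).
Proof.
  intros Nc Ng. destruct (bounded_gen c Nc Ng) as [K HK].
  pose proof (pos_INR K) as PK.
  exists (1 / (INR K + 1)). split. { apply Rdiv_lt_0_compat; lra. }
  intros H pi U [x [c0 [Hc B]]].
  assert (c0p : 0 <= c0).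
  { eapply Rle_trans; [apply (hnrm_pos (hsub (pi (zpoly_eval c (Z.of_nat 0)) x) x)) | apply (B (zpoly_eval c (Z.of_nat 0)))]. exists 0%nat. auto. }
  apply (inv_vector pi U x (INR K * c0)).
  - intro n. apply (reach_bound pi U x _ c0 c0p B K n (HK n)).
  - pose proof (hnrm_pos x).
    assert (c0 * (INR K + 1) < hnorm x).
    { replace (hnorm x) with ((1 / (INR K + 1) * hnorm x) * (INR K + 1)) by (field; lra).
      apply Rmult_lt_compat_r; lra. }
    nra.
Qed.
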